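(* Let $q$ be a prime power and $r\ge1$ an integer. For every integer $j$ with $0\le j\le q^r+1$ there exists a $q^r$-divisible set of points in a projective space over $\mathbb{F}_q$ of cardinality $$n=\frac{q^{2r}-1}{q-1}+j\cdot\left((q-1)q^r-\frac{q^r-1}{q-1}\right).$$
   Context: Points are $1$-dimensional subspaces of $\mathbb{F}_q^v$. A set $\mathcal{C}$ of points is $\Delta$-divisible if there is an integer $u$ with $|\mathcal{C}\cap H|\equiv u\pmod{\Delta}$ for every hyperplane $H$ of $\mathbb{F}_q^v$, where $\mathcal{C}\cap H$ is the set of points of $\mathcal{C}$ contained in $H$. *)

(* Defs.v *)
From HB Require Import structures.
From mathcomp Require Import all_boot all_order all_algebra all_field.
Set Implicit Arguments. Unset Strict Implicit. Unset Printing Implicit Defensive.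
Import GRing.Theory.

Definition is_point (F : finFieldType) (v : nat) (P : {vspace 'rV[F]_v}) : bool :=
  \dim P == 1%N.

Definition is_hyperplane (F : finFieldType) (v : nat) (H : {vspace 'rV[F]_v}) : bool :=
  \dim H == v.-1.

Definition point_set (F : finFieldType) (v : nat) (C : seq {vspace 'rV[F]_v}) : bool :=
  uniq C && all (@is_point F v) C.

Definition count_in (F : finFieldType) (v : nat)
    (C : seq {vspace 'rV[F]_v}) (H : {vspace 'rV[F]_v}) : nat :=
  count (fun P => (P <= H)%VS) C.

Definition divisible_set (F : finFieldType) (v : nat) (Delta : nat)
    (C : seq {vspace 'rV[F]_v}) : Prop :=
  exists u : nat, forall H : {vspace 'rV[F]_v}, is_hyperplane H ->
    count_in C H = u %[mod Delta].

(* Main.v *)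
Require Import Defs.
From HB Require Import structures.
From mathcomp Require Import all_boot all_order all_algebra all_field zify.
From Stdlib Require Import Classical.
Set Implicit Arguments. Unset Strict Implicit. Unset Printing Implicit Defensive.
Import GRing.Theory.
Local Open Scope ring_scope.


Lemma card_natr0 (F : finFieldType) (L : fieldExtType F) : (#|F|%:R : L) = 0.
Proof.
have [p _ pcharFp] := finPcharP F.
rewrite (card_pprimeChar pcharFp) natrX.
have pL : p \in [pchar L] by rewrite pchar_lalg.
rewrite (pcharf0 pL) expr0n.
case: eqP => // H.
have := finNzRing_gt1 F; rewrite (card_pprimeChar pcharFp) H expn0 //.
Qed.

Lemma ext_exists (F : finFieldType) (r : nat) : (0 < r)%N ->
  {L : fieldExtType F | \dim {:L} = r}.
Proof.
move=> r_gt0; set m := (#|F| ^ r)%N.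
have q_gt1 := finNzRing_gt1 F.
have m_gt1: (m > 1)%N by rewrite /m (ltn_exp2l 0).
have m_gt0 := ltnW m_gt1; have m1_gt0: (m.-1 > 0)%N by rewrite -ltnS prednK.
pose q (R : nzRingType) : {poly R} := 'X^m - 'X.
have Dq R: q R = ('X^(m.-1) - 1) * ('X - 0).
  by rewrite subr0 mulrBl mul1r -exprSr prednK.
have /FinSplittingFieldFor[/= L splitLq]: q F != 0.
  by rewrite Dq monic_neq0 ?rpredM ?monicXsubC ?monicXnsubC.
rewrite [map_poly _ _]rmorphB rmorphXn /= map_polyX -/(q L) in splitLq.
pose Fm := FinFieldExtType L; exists L.
have /finField_galois_generator[/= a _ Da]: (1 <= {:L})%VS by apply: sub1v.
pose Em := fixedSpace (a ^+ r)%g; rewrite dimv1 expn1 in Da.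
have{splitLq} [zs DqL defL] := splitLq.
have Uzs: uniq zs.
  rewrite -separable_prod_XsubC -(eqp_separable DqL) Dq separable_root andbC.
  rewrite /root !hornerE subr_eq0 eq_sym expr0n gtn_eqF ?oner_eq0 //=.
  rewrite cyclotomic.separable_Xn_sub_1 // -subn1 natrB // subr_eq0.
  by rewrite natrX card_natr0 expr0n gtn_eqF // eq_sym oner_eq0.
have cardFm : #|Fm| = m.
  suffices /eq_card->: Fm =i zs.
    apply: succn_inj; rewrite (card_uniqP _) //= -(size_prod_XsubC _ id).
    by rewrite -(eqp_size DqL) size_polyDl size_polyXn // size_polyN size_polyX.
  have in_zs: zs =i Em.
    move=> z; rewrite -root_prod_XsubC -(eqp_root DqL) (sameP fixedSpaceP eqP).
    rewrite /root !hornerE subr_eq0 /= /m; congr (_ == z).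
    elim: (r) => [|i IHi]; first by rewrite gal_id.
    by rewrite expgSr expnSr exprM IHi galM ?Da ?memvf.
  suffices defEm: Em = {:L}%VS by move=> z; rewrite in_zs defEm memvf.
  apply/eqP; rewrite eqEsubv subvf -defL -[Em]subfield_closed agenvS //.
  by rewrite subv_add sub1v; apply/span_subvP=> z; rewrite in_zs.
have : #|Fm| = (#|F| ^ \dim {:L})%N.
  by rewrite -(@card_vspace F (finvect_type L)) ; apply: eq_card => x; rewrite memvf.
rewrite cardFm => /eqP; rewrite /m eqn_exp2l // => /eqP ->. done.
Qed.


Lemma vlineZ' (F : fieldType) (vT : vectType F) (c : F) (x : vT) :
  c != 0 -> (<[c *: x]> = <[x]>)%VS.
Proof.
move=> c0; apply/eqP; rewrite eqEsubv -!memvE memvZ ?memv_line //=.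
idtac.
by rewrite -{1}[x](scalerK c0) memvZ // memv_line.
Qed.

Definition pts (F : finFieldType) n (A : {set 'rV[F]_n}) : seq {vspace 'rV[F]_n} :=
  undup [seq <[x]>%VS | x <- enum A].

Lemma pts_fiber (F : finFieldType) n (A : {set 'rV[F]_n}) x0 :
  0 \notin A -> (forall c x, c != 0 -> x \in A -> c *: x \in A) -> x0 \in A ->
  #|[set x in A | <[x]>%VS == <[x0]>%VS]| = (#|F| - 1)%N.
Proof.
move=> A0 AZ Ax0.
have x0n0 : x0 != 0 by apply: contraNneq A0 => <-.
have -> : [set x in A | <[x]>%VS == <[x0]>%VS] = [set c *: x0 | c in [set~ (0:F)]].
  apply/setP => x; rewrite !inE; apply/andP/imsetP.
  - move=> [Ax /eqP e]; have : x \in <[x0]>%VS by rewrite -e memv_line.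
    case/vlineP => c xc; exists c => //; rewrite !inE.
    by apply: contraNneq A0 => c0; rewrite -[0]/(0 : 'rV_n) -(scale0r x0) -c0 -xc.
  - case=> c; rewrite !inE => c0 ->; rewrite AZ //= vlineZ' //.
rewrite card_imset ?cardsC1 ?subn1 //.
by move=> a b /= /eqP; rewrite -subr_eq0 -scalerBl scaler_eq0 (negPf x0n0) orbF subr_eq0 => /eqP.
Qed.

Lemma cone_count (F : finFieldType) n (A : {set 'rV[F]_n}) (H : {vspace 'rV[F]_n}) :
  0 \notin A -> (forall c x, c != 0 -> x \in A -> c *: x \in A) ->
  ((#|F| - 1) * count (fun P => (P <= H)%VS) (pts A) = #|[set x in A | x \in H]|)%N.
Proof.
move=> A0 AZ.
rewrite -sum1_card.
have e1 : forall x, x \in A -> (1 = \sum_(P <- pts A) (P == <[x]>%VS))%N.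
  move=> x Ax.
  rewrite (_ : \sum_(P <- pts A) (P == <[x]>%VS) = \sum_(P <- pts A | P == <[x]>%VS) 1)%N; last first.
    by rewrite [RHS]big_mkcond; apply: eq_bigr => P _; case: eqP.
  rewrite sum1_count (count_uniq_mem _ (undup_uniq _)) ?mem_undup //.
  suff -> : (<[x]>%VS \in [seq <[x0]>%VS | x0 <- enum A]) by [].
  by apply/mapP; exists x; rewrite ?mem_enum.
rewrite (eq_bigr (fun x => \sum_(P <- pts A) (P == <[x]>%VS))%N); last first.
  by move=> x; rewrite inE => /andP[/e1].
rewrite exchange_big /= -sum1_count big_mkcond /= big_distrr /=.
apply: eq_big_seq => P; rewrite mem_undup => /mapP[x0]; rewrite mem_enum => Ax0 ->.
case: ifP => sH.
  rewrite muln1.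
  rewrite (eq_bigr (fun i => if <[x0]>%VS == <[i]>%VS then 1 else 0)%N); last by move=> i _; case: eqP.
  rewrite -big_mkcondr -(pts_fiber A0 AZ Ax0) -sum1_card; apply: eq_bigl => x; rewrite !inE eq_sym.
  case: (x \in A) => //=; case: (<[x0]>%VS =P <[x]>%VS) => e; [by rewrite andbT memvE -e | by rewrite andbF].
rewrite muln0 big1 // => x; rewrite inE => /andP[Ax xH]; case: eqP => // e.
by rewrite e -memvE xH in sH.
Qed.


Lemma pairZ (F : fieldType) (U V : lmodType F) (a : F) (x : U) (y : V) :
  a *: (x, y) = (a *: x, a *: y).
Proof. by []. Qed.
Lemma pairD (F : fieldType) (U V : lmodType F) (x x' : U) (y y' : V) :
  (x, y) + (x', y') = (x + x', y + y').
Proof. by []. Qed.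
Lemma pair0 (F : fieldType) (U V : lmodType F) : (0 : U * V) = (0, 0).
Proof. by []. Qed.

Section Constr.
Variables (F : finFieldType) (L : fieldExtType F) (j : nat).
Definition KK := finvect_type L.
Definition PP := ((KK * KK) * ('rV[F]_j * 'rV[F]_j))%type.

Definition sp (o : option KK) (y : KK) : PP :=
  match o with Some c => ((y, c * y), (0, 0)) | None => ((0, y), (0, 0)) end.

Lemma sp_lin o : linear (sp o).
Proof.
move=> a y1 y2; case: o => [c|] /=; rewrite !pairZ !pairD !scaler0 !addr0 //.
by rewrite mulrDr scalerAr.
Qed.

HB.instance Definition _ o := GRing.isLinear.Build F KK PP *:%R (sp o) (sp_lin o).

Definition S o : {vspace PP} := (linfun (sp o) @: fullv)%VS.

Definition cond (o : option KK) (w : KK * KK) : bool :=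
  match o with Some c => w.2 == c * w.1 | None => w.1 == 0 end.

Lemma memS o (x : PP) : (x \in S o) = (x.2 == 0) && cond o x.1.
Proof.
apply/memv_imgP/andP => [[y _ ->]|[/eqP x2 cx]]; rewrite ?lfunE.
  by case: o => [c|] /=; rewrite eqxx.
exists (match o with Some _ => x.1.1 | None => x.1.2 end); rewrite ?memvf // lfunE.
move: x x2 cx => [[a b] z] /= -> ; case: o => [c|] /= /eqP -> //.
Qed.

Definition winj (w : KK * KK) : PP := (w, 0).
Lemma winj_lin : linear winj.
Proof. by move=> a y1 y2; rewrite /winj pairZ pairD scaler0 addr0. Qed.
HB.instance Definition _ := GRing.isLinear.Build F (KK * KK)%type PP *:%R winj winj_lin.

Definition W : {vspace PP} := (linfun winj @: fullv)%VS.

Lemma memW (x : PP) : (x \in W) = (x.2 == 0).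
Proof.
apply/memv_imgP/eqP => [[y _ ->]|x2]; first by rewrite lfunE.
by exists x.1; rewrite ?memvf // lfunE /winj; case: x x2 => ? ? /= ->.
Qed.

Definition dl (i : 'I_j) : 'rV[F]_j := delta_mx 0 i.
Definition supp_in (i : 'I_j) (z : 'rV[F]_j) : bool := [forall k, (k != i) ==> (z 0 k == 0)].

Lemma supp_inP i (z : 'rV[F]_j) : reflect (z = z 0 i *: dl i) (supp_in i z).
Proof.
apply: (iffP forallP) => [H|->] .
  apply/rowP => k; rewrite !mxE; case: (eqVneq k i) => [->|ki].
    by rewrite eqxx mulr1.
  by rewrite andbF mulr0; move/implyP: (H k) => /(_ ki) /eqP.
by move=> k; apply/implyP => ki; rewrite !mxE (negPf ki) andbF mulr0.
Qed.

Lemma supp_in_dl i (c : F) : supp_in i (c *: dl i).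
Proof. by apply/supp_inP; rewrite !mxE !eqxx mulr1. Qed.

Lemma dl_neq0 i : dl i != 0.
Proof. by apply/eqP => /rowP /(_ i); rewrite !mxE !eqxx => /eqP; rewrite oner_eq0. Qed.

Variable sg : 'I_j -> option KK.
Definition E i : PP := (0, (dl i, 0)).
Definition Fv i : PP := (0, (0, dl i)).
Definition T i : {vspace PP} := (S (sg i) + <[E i]>)%VS.
Definition T' i : {vspace PP} := (S (sg i) + <[Fv i]>)%VS.
Definition U i : {vspace PP} := (T i + <[Fv i]>)%VS.

Lemma memT i (x : PP) : (x \in T i) = [&& cond (sg i) x.1, supp_in i x.2.1 & x.2.2 == 0].
Proof.
apply/memv_addP/and3P => [[s sS [v /vlineP[c ->] ->]]|[cx sx /eqP z2]].
  move: sS; rewrite memS; case: s => [s1 [s2a s2b]] /andP[/eqP [-> ->] cs] /=.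
  by rewrite ?pairZ ?pairD !scaler0 !addr0 !add0r; split; rewrite ?supp_in_dl ?eqxx.
exists (x.1, 0); first by rewrite memS eqxx.
exists (x.2.1 0 i *: E i); first by rewrite memvZ ?memv_line.
case: x cx sx z2 => [w [z1 z2]] /= _ /supp_inP {1}-> ->.
by rewrite !pairZ !pairD !scaler0 !addr0 !add0r.
Qed.

Lemma memT' i (x : PP) : (x \in T' i) = [&& cond (sg i) x.1, x.2.1 == 0 & supp_in i x.2.2].
Proof.
apply/memv_addP/and3P => [[s sS [v /vlineP[c ->] ->]]|[cx /eqP z1 sx]].
  move: sS; rewrite memS; case: s => [s1 [s2a s2b]] /andP[/eqP [-> ->] cs] /=.
  by rewrite ?pairZ ?pairD !scaler0 !addr0 !add0r; split; rewrite ?supp_in_dl ?eqxx.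
exists (x.1, 0); first by rewrite memS eqxx.
exists (x.2.2 0 i *: Fv i); first by rewrite memvZ ?memv_line.
case: x cx z1 sx => [w [z1 z2]] /= _ -> /supp_inP {1}->.
by rewrite !pairZ !pairD !scaler0 !addr0 !add0r.
Qed.

Lemma memU i (x : PP) : (x \in U i) = [&& cond (sg i) x.1, supp_in i x.2.1 & supp_in i x.2.2].
Proof.
apply/memv_addP/and3P => [[s sT [v /vlineP[c ->] ->]]|[cx sx1 sx2]].
  move: sT; rewrite memT; case: s => [s1 [s2a s2b]] /and3P[cs ss /eqP /= ->] /=.
  by rewrite ?pairZ ?pairD !scaler0 !addr0 !add0r; split; rewrite ?supp_in_dl ?eqxx.
exists (x.1, (x.2.1, 0)); first by rewrite memT /= eqxx cx sx1.
exists (x.2.2 0 i *: Fv i); first by rewrite memvZ ?memv_line.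
case: x cx sx1 sx2 => [w [z1 z2]] /= _ _ /supp_inP {1}->.
by rewrite !pairZ !pairD !scaler0 !addr0 !add0r.
Qed.

Lemma dim_S o : \dim (S o) = \dim {:KK}.
Proof.
rewrite /S limg_dim_eq // capfv; apply/eqP/lker0P => y1 y2; rewrite !lfunE.
by case: o => [c|] /= [].
Qed.

Lemma dim_W : \dim W = (\dim {:KK} + \dim {:KK})%N.
Proof.
rewrite /W limg_dim_eq; last first.
  by rewrite capfv; apply/eqP/lker0P => y1 y2; rewrite !lfunE => -[].
by rewrite !dimvf.
Qed.

Lemma E_neq0 i : E i != 0.
Proof. by apply/eqP => -[] /eqP; rewrite (negPf (dl_neq0 i)). Qed.
Lemma Fv_neq0 i : Fv i != 0.
Proof. by apply/eqP => -[] /eqP; rewrite (negPf (dl_neq0 i)). Qed.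

Lemma dim_T i : \dim (T i) = (\dim {:KK}).+1.
Proof.
rewrite /T dimv_disjoint_sum ?dim_S ?dim_vline ?E_neq0 ?addn1 //.
apply/eqP; rewrite -subv0; apply/subvP => x; rewrite memv_cap memv0.
case/andP => xS /vlineP[c xc]; rewrite xc; move: xS; rewrite memS xc /E => /andP[/eqP e _].
have /eqP : c *: dl i = 0 by move: e; rewrite !pairZ /= pair0 => -[].
by rewrite scaler_eq0 (negPf (dl_neq0 i)) orbF => /eqP ->; rewrite scale0r.
Qed.

Lemma dim_T' i : \dim (T' i) = (\dim {:KK}).+1.
Proof.
rewrite /T' dimv_disjoint_sum ?dim_S ?dim_vline ?Fv_neq0 ?addn1 //.
apply/eqP; rewrite -subv0; apply/subvP => x; rewrite memv_cap memv0.
case/andP => xS /vlineP[c xc]; rewrite xc; move: xS; rewrite memS xc /Fv => /andP[/eqP e _].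
have /eqP : c *: dl i = 0 by move: e; rewrite !pairZ /= pair0 => -[].
by rewrite scaler_eq0 (negPf (dl_neq0 i)) orbF => /eqP ->; rewrite scale0r.
Qed.

Lemma dim_U i : \dim (U i) = (\dim {:KK}).+2.
Proof.
rewrite /U dimv_disjoint_sum ?dim_T ?dim_vline ?Fv_neq0 ?addn1 //.
apply/eqP; rewrite -subv0; apply/subvP => x; rewrite memv_cap memv0.
case/andP => xS /vlineP[c xc]; rewrite xc; move: xS; rewrite memT xc /Fv => /and3P[_ _].
move=> e; have /eqP : c *: dl i = 0 by move: e; rewrite !pairZ /= => /eqP.
by rewrite scaler_eq0 (negPf (dl_neq0 i)) orbF => /eqP ->; rewrite scale0r.
Qed.

Lemma cond_uniq o o' (w : KK * KK) : cond o w -> cond o' w -> w != 0 -> o = o'.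
Proof.
case: w => a b; case: o => [c|]; case: o' => [c'|] //= /eqP-> /eqP.
- case: (eqVneq a 0) => [->|a0]; first by rewrite !mulr0 pair0 eqxx.
  by move=> /(mulIf a0) ->.
- by move=> ->; rewrite mulr0 pair0 eqxx.
- by move=> ->; rewrite mulr0 pair0 eqxx.
Qed.

Lemma pair_eq0 (A B : lmodType F) (a : A) (b : B) : ((a, b) == 0) = (a == 0) && (b == 0).
Proof. by rewrite pair0 xpair_eqE. Qed.

Lemma supp_in0 i : supp_in i 0.
Proof. by apply/forallP => k; rewrite mxE eqxx implybT. Qed.

Lemma supp_in2 i k (z : 'rV[F]_j) : supp_in i z -> supp_in k z -> i != k -> z = 0.
Proof.
move=> /supp_inP zi /forallP/(_ i)/implyP; rewrite eq_sym => H /H /eqP z0.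
by rewrite zi z0 scale0r.
Qed.

Hypothesis sg_inj : injective sg.

Lemma U_uniq (x : PP) i k : x != 0 -> x \in U i -> x \in U k -> i = k.
Proof.
case: x => [w [z1 z2]] nx0; rewrite !memU /= => /and3P[ci s1i s2i] /and3P[ck s1k s2k].
case: (eqVneq i k) => // ik.
rewrite (supp_in2 s1i s1k ik) (supp_in2 s2i s2k ik) in nx0 *.
apply: sg_inj; apply: (cond_uniq ci ck).
by apply: contraNneq nx0 => ->; rewrite !pair_eq0 !eqxx.
Qed.

Lemma sum_uniq (p : pred 'I_j) : (forall i k, p i -> p k -> i = k) ->
  (\sum_(i < j) p i = [exists i, p i])%N.
Proof.
move=> pu; case: existsP => [[i pi]|np].
  rewrite (bigD1 i) //= pi big1 // => k ki; case: (boolP (p k)) => // pk.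
  by rewrite (pu _ _ pi pk) eqxx in ki.
by rewrite big1 // => i _; case: (boolP (p i)) => // pi; case: np; exists i.
Qed.

Definition inVC (x : PP) : bool := (x != 0) && (((x \in W) && [forall i, x \notin U i])
   || [exists i, (x \in U i) && (x \notin T i) && (x \notin T' i)]).

Lemma ident (x : PP) :
  (inVC x + \sum_(i < j) ((x \in T i) + (x \in T' i)) + (x == 0%R) =
   (x \in W) + \sum_(i < j) (x \in U i) + j * (x == 0%R))%N.
Proof.
case: (eqVneq x 0) => [->|nx0].
  rewrite /inVC eqxx /= mem0v.
  under eq_bigr do rewrite !mem0v.
  under [in RHS]eq_bigr do rewrite mem0v.
  rewrite !sum_nat_const card_ord; lia.
have sU : (\sum_(i < j) (x \in U i) = [exists i, x \in U i])%N.
  by apply: sum_uniq => i k; apply: U_uniq.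
case: (boolP (x \in W)) => xW.
  have eT : forall i, (x \in T i) = (x \in U i) /\ (x \in T' i) = (x \in U i).
    move=> i; clear sU; move: xW; rewrite memW; case: x nx0 => [w [z1 z2]] _; rewrite pair_eq0 => /andP[/eqP-> /eqP->].
    by rewrite memT memT' memU /= supp_in0 eqxx.
  rewrite (eq_bigr (fun i => 2 * (x \in U i))%N) => [|i _]; last first.
    by case: (eT i) => -> ->; rewrite mul2n addnn.
  rewrite -big_distrr /= sU /inVC nx0 xW /=.
  case: (boolP [exists i, x \in U i]) => [/existsP[i xi]|/existsPn nex] /=.
    have -> : [forall i0, x \notin U i0] = false.
      by apply/negbTE/forallPn; exists i; rewrite negbK.
    have -> : [exists i0, (x \in U i0) && (x \notin T i0) && (x \notin T' i0)] = false.
      by apply/negbTE/existsPn => k; case: (eT k) => -> ->; case: (x \in U k).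
    by rewrite !muln0.
  have -> : [forall i0, x \notin U i0] = true by apply/forallP.
  by rewrite /= !muln0.
have pI : forall i, (((x \in U i) && (x \notin T i) && (x \notin T' i)) + ((x \in T i) + (x \in T' i)))%N = (x \in U i) :> nat.
  move=> i; clear sU; move: xW; rewrite memW memT memT' memU.
  case: x nx0 => [w [z1 z2]] _ /=; rewrite pair_eq0.
  case: (cond _ _) => //= nz.
  case: (eqVneq z1 0) nz => [->|n1]; case: (eqVneq z2 0) => [->|n2]; rewrite ?supp_in0 ?eqxx //= => _;
    by case: (supp_in i _); case: (supp_in i _).
have sV : (\sum_(i < j) ((x \in U i) && (x \notin T i) && (x \notin T' i))
    = [exists i, (x \in U i) && (x \notin T i) && (x \notin T' i)])%N.
  by apply: sum_uniq => i k /andP[/andP[xi _] _] /andP[/andP[xk _] _]; apply: U_uniq xi xk.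
rewrite /inVC nx0 (negPf xW) /= -sV -(eq_bigr _ (fun i _ => pI i)) !big_split /=.
lia.
Qed.

Lemma memvZ' (V : {vspace PP}) (c : F) (x : PP) : c != 0 -> (c *: x \in V) = (x \in V).
Proof.
move=> c0; apply/idP/idP => [|xV]; last by rewrite memvZ.
by move/(memvZ c^-1); rewrite scalerA mulVf // scale1r.
Qed.

Lemma inVC_scale (c : F) (x : PP) : c != 0 -> inVC (c *: x) = inVC x.
Proof.
move=> c0; rewrite /inVC !memvZ' // scaler_eq0 (negPf c0) /=.
congr (_ && (_ || _)).
  by congr (_ && _); apply/forallP/forallP => H k; move: (H k); rewrite !memvZ'.
by apply/existsP/existsP => -[k H]; exists k; move: H; rewrite !memvZ'.
Qed.

Definition nn := \dim {:PP}.
Definition vr (x : PP) : 'rV[F]_nn := \row_i coord (vbasis {:PP}) i x.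
Lemma vr_lin : linear vr.
Proof. by move=> a x y; apply/rowP => i; rewrite !mxE linearP. Qed.
HB.instance Definition _ := GRing.isLinear.Build F PP 'rV[F]_nn *:%R vr vr_lin.
Definition r2v (y : 'rV[F]_nn) : PP := \sum_i y 0 i *: (vbasis {:PP})`_i.
Lemma v2rK : cancel vr r2v.
Proof.
move=> x; rewrite /r2v {2}(coord_vbasis (memvf x)).
by apply: eq_bigr => i _; rewrite mxE.
Qed.
Lemma r2vK : cancel r2v vr.
Proof.
move=> y; apply/rowP => i; rewrite mxE coord_sum_free //.
exact: (basis_free (vbasisP _)).
Qed.
Lemma r2v_lin : linear r2v.
Proof.
move=> a x y; rewrite /r2v scaler_sumr -big_split; apply: eq_bigr => i _.
by rewrite !mxE scalerDl scalerA.
Qed.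
HB.instance Definition _ := GRing.isLinear.Build F 'rV[F]_nn PP *:%R r2v r2v_lin.
Notation phi := (linfun vr).
Definition tr (X : {vspace PP}) : {vspace 'rV[F]_nn} := (phi @: X)%VS.

Lemma mem_tr X y : (y \in tr X) = (r2v y \in X).
Proof.
rewrite /tr; apply/memv_imgP/idP => [[x xX ->]|yX]; first by rewrite lfunE /= v2rK.
by exists (r2v y) => //; rewrite lfunE /= r2vK.
Qed.

Lemma dim_tr X : \dim (tr X) = \dim X.
Proof.
rewrite /tr limg_dim_eq //; apply/eqP; rewrite -subv0; apply/subvP => x.
rewrite memv_cap memv_ker lfunE /= => /andP[_ /eqP e].
by rewrite memv0 -(v2rK x) e linear0.
Qed.

Lemma r2v_eq0 (y : 'rV[F]_nn) : (r2v y == 0) = (y == 0).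
Proof.
by rewrite -(linear0 r2v) (inj_eq (can_inj r2vK)).
Qed.

Definition VCs : {set 'rV[F]_nn} := [set y | inVC (r2v y)].

Lemma VCs0 : 0 \notin VCs.
Proof. by rewrite inE linear0 /inVC eqxx. Qed.

Lemma VCsZ (c : F) y : c != 0 -> y \in VCs -> c *: y \in VCs.
Proof. by move=> c0; rewrite !inE linearZ /= inVC_scale. Qed.

Lemma sumb (b : pred 'rV[F]_nn) (H : {vspace 'rV[F]_nn}) :
  (\sum_(y | y \in H) (b y : nat) = #|[set y | b y && (y \in H)]|)%N.
Proof.
rewrite (eq_bigr (fun y => if b y then 1 else 0)%N); last by move=> y _; case: (b y).
rewrite -big_mkcondr -sum1_card; apply: eq_bigl => y; rewrite !inE andbC //.
Qed.

Lemma cntE (X H : {vspace 'rV[F]_nn}) :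
  #|[set y | (y \in X) && (y \in H)]| = (#|F| ^ \dim (X :&: H))%N.
Proof. by rewrite -card_vspace; apply: eq_card => y; rewrite inE memv_cap. Qed.

Lemma sumH (H : {vspace 'rV[F]_nn}) :
  (#|[set y in VCs | y \in H]| + \sum_(i < j) (#|F| ^ \dim (tr (T i) :&: H) + #|F| ^ \dim (tr (T' i) :&: H)) + 1
   = #|F| ^ \dim (tr W :&: H) + \sum_(i < j) #|F| ^ \dim (tr (U i) :&: H) + j)%N.
Proof.
have key : forall y : 'rV[F]_nn, ((y \in VCs) + \sum_(i < j) ((y \in tr (T i)) + (y \in tr (T' i))) + (y == 0%R)
   = (y \in tr W) + \sum_(i < j) (y \in tr (U i)) + j * (y == 0%R))%N.
  move=> y; rewrite inE !mem_tr -r2v_eq0.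
  under eq_bigr do rewrite !mem_tr.
  under [in RHS]eq_bigr do rewrite mem_tr.
  exact: ident.
have : (\sum_(y | y \in H) ((y \in VCs) + \sum_(i < j) ((y \in tr (T i)) + (y \in tr (T' i))) + (y == 0%R))
   = \sum_(y | y \in H) ((y \in tr W) + \sum_(i < j) (y \in tr (U i)) + j * (y == 0%R)))%N.
  by apply: eq_bigr => y _; exact: key.
rewrite !big_split /= -!big_distrr /=.
rewrite !(@exchange_big _ _ _ _ _ _ _ (fun i => i \in H)) /=.
have sc : forall X : {vspace 'rV[F]_nn}, (\sum_(i in H) (i \in X) = #|F| ^ \dim (X :&: H))%N.
  by move=> X; rewrite sumb cntE.
have sT : (\sum_(j0 < j) \sum_(i in H) ((i \in tr (T j0)) + (i \in tr (T' j0)))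
   = \sum_(j0 < j) (#|F| ^ \dim (tr (T j0) :&: H) + #|F| ^ \dim (tr (T' j0) :&: H)))%N.
  by apply: eq_bigr => k _; rewrite big_split /= !sc.
have sU : (\sum_(j0 < j) \sum_(i in H) (i \in tr (U j0))
   = \sum_(j0 < j) #|F| ^ \dim (tr (U j0) :&: H))%N.
  by apply: eq_bigr => k _; rewrite !sc.
have s0 : (\sum_(i in H) (i == 0%R) = 1)%N.
  by rewrite (bigD1 0) ?mem0v //= eqxx big1 // => y /andP[_ /negPf ->].
rewrite sT sU s0 sc sumb muln1 big_split /=.
by [].
Qed.


Lemma dim_full : \dim (fullv : {vspace 'rV[F]_nn}) = nn.
Proof. by rewrite dimvf /dim /= mul1n. Qed.

Lemma capH_div (X H : {vspace 'rV[F]_nn}) k : \dim H = nn.-1 -> (k < \dim X)%N ->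
  (#|F| ^ k %| #|F| ^ \dim (X :&: H))%N.
Proof.
move=> dH kX; apply: dvdn_exp2l.
have := dimv_sum_cap X H; have := dimvS (subvf (X + H)%VS); rewrite dim_full dH.
have := dimvS (subvf X); rewrite dim_full; lia.
Qed.

Definition dd := \dim {:KK}.

Lemma count_mod (H : {vspace 'rV[F]_nn}) : (0 < dd)%N -> \dim H = nn.-1 ->
  ((#|F| - 1) * count (fun P => (P <= H)%VS) (pts VCs) + 1 = j %[mod #|F| ^ dd])%N.
Proof.
move=> d0 dH; rewrite (cone_count H VCs0 VCsZ).
have e := sumH H.
have d1 : (#|F| ^ dd %| \sum_(i < j) (#|F| ^ \dim (tr (T i) :&: H) + #|F| ^ \dim (tr (T' i) :&: H)))%N.
  apply: dvdn_sum => i _; apply: dvdn_add; apply: capH_div => //; rewrite dim_tr ?dim_T ?dim_T' //.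
have d2 : (#|F| ^ dd %| #|F| ^ \dim (tr W :&: H) + \sum_(i < j) #|F| ^ \dim (tr (U i) :&: H))%N.
  apply: dvdn_add; first by apply: capH_div; rewrite // dim_tr dim_W -/dd; lia.
  by apply: dvdn_sum => i _; apply: capH_div; rewrite // dim_tr dim_U /dd.
have : ((#|[set y in VCs | y \in H]| + 1 + \sum_(i < j) (#|F| ^ \dim (tr (T i) :&: H) + #|F| ^ \dim (tr (T' i) :&: H))) %% #|F| ^ dd
   = (#|F| ^ \dim (tr W :&: H) + \sum_(i < j) #|F| ^ \dim (tr (U i) :&: H) + j) %% #|F| ^ dd)%N.
  by rewrite -e addnAC.
move=> h; rewrite -modnDmr (eqP d1) addn0 -(modnDml (#|F| ^ \dim (tr W :&: H) + _) j) (eqP d2) add0n in h; exact: h.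
Qed.

Lemma size_eq : ((#|F| - 1) * size (pts VCs) + j * (2 * #|F| ^ dd.+1) + 1
   = #|F| ^ (dd + dd) + j * #|F| ^ dd.+2 + j)%N.
Proof.
have := sumH fullv; rewrite -(cone_count fullv VCs0 VCsZ).
rewrite (eq_count (a2 := predT)) ?count_predT; last by move=> P; rewrite /= subvf.
rewrite !capvf dim_tr dim_W.
under eq_bigr do rewrite !capvf !dim_tr dim_T dim_T'.
under [in RHS]eq_bigr do rewrite capvf dim_tr dim_U.
rewrite !sum_nat_const card_ord /dd mul2n -addnn => h; exact: h.
Qed.
End Constr.

Lemma mod_cancel p m a b : coprime m p -> (p * a = p * b %[mod m])%N -> (a = b %[mod m])%N.
Proof.
move=> cop; wlog le : a b / (a <= b)%N.
  move=> IH; case: (leqP a b) => [|/ltnW] h; first exact: IH.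
  by move=> e; apply/esym/IH.
move/eqP; rewrite eq_sym eqn_mod_dvd ?leq_mul2l ?le ?orbT // -mulnBr Gauss_dvdr //.
by rewrite -eqn_mod_dvd // eq_sym => /eqP.
Qed.

Lemma arith q r j s : (1 < q)%N -> (0 < r)%N ->
  ((q - 1) * s + j * (2 * q ^ r.+1) + 1 = q ^ (r + r) + j * q ^ r.+2 + j)%N ->
  s = ((q ^ (2 * r) - 1) %/ (q - 1) + j * ((q - 1) * q ^ r - (q ^ r - 1) %/ (q - 1)))%N.
Proof.
move=> q1 r0 h.
have q0 : (0 < q - 1)%N by lia.
have [A eA] : exists A, (q ^ (2 * r) - 1 = (q - 1) * A)%N.
  by exists (\sum_(i < 2 * r) q ^ i)%N; rewrite subn1 predn_exp subn1.
have [B eB] : exists B, (q ^ r - 1 = (q - 1) * B)%N.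
  by exists (\sum_(i < r) q ^ i)%N; rewrite subn1 predn_exp subn1.
rewrite eA eB !mulKn //.
apply/eqP; rewrite -(eqn_pmul2l q0); apply/eqP.
have x1 : (1 <= q ^ r)%N by rewrite expn_gt0; lia.
have e2 : (q ^ (2 * r) = q ^ r * q ^ r)%N by rewrite mul2n -addnn expnD.
rewrite e2 in eA. rewrite expnD in h.
rewrite !expnS in h.
set x := (q ^ r)%N in x1 eA eB h *.
set p := (q - 1)%N in q0 eA eB h *.
have qp : q = p.+1 by rewrite /p; lia.
rewrite qp in h.
nia.
Qed.

Theorem corollary4p17 (F : finFieldType) (r j : nat) :
  (1 <= r)%N -> (j <= #|F| ^ r + 1)%N ->
  let q := #|F| in
  exists (v : nat) (C : seq {vspace 'rV[F]_v}),
    point_set C /\ divisible_set (q ^ r) C /\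
    size C = ((q ^ (2 * r) - 1) %/ (q - 1)
              + j * ((q - 1) * q ^ r - (q ^ r - 1) %/ (q - 1)))%N.
Proof.
move=> r1 jle q.
have [L dL] := ext_exists F r1.
have ddr : dd L = r by exact: dL.
have cardK : #|KK L| = (q ^ r)%N.
  rewrite -ddr /dd -(@card_vspace F (KK L)); apply: eq_card => x; rewrite memvf //.
have jle' : (j <= #|{: option (KK L)}|)%N by rewrite card_option cardK -addn1.
pose sg (i : 'I_j) : option (KK L) := enum_val (widen_ord jle' i).
have sg_inj : injective sg.
  by move=> a b /enum_val_inj /(congr1 val) /= /val_inj.
have q1 : (1 < q)%N := finNzRing_gt1 F.
exists (nn L j), (pts (VCs sg)); split; [|split].
- apply/andP; split; first exact: undup_uniq.
  apply/allP => P; rewrite mem_undup => /mapP[y]; rewrite mem_enum => yV ->.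
  have y0 : y != 0 by apply: contraNneq (VCs0 sg) => y0; rewrite -y0.
  by rewrite /is_point dim_vline y0.
- case: (classic (exists H : {vspace 'rV[F]_(nn L j)}, is_hyperplane H)) => [[H0 hH0]|nH]; last first.
    by exists 0%N => H hH; case: nH; exists H.
  exists (count_in (pts (VCs sg)) H0) => H hH.
  have c1 := count_mod sg_inj (ltac:(rewrite ddr; exact: r1)) (eqP hH).
  have c0 := count_mod sg_inj (ltac:(rewrite ddr; exact: r1)) (eqP hH0).
  rewrite ddr in c1 c0.
  apply: (@mod_cancel (q - 1)); first by rewrite coprimeXl // -[in X in coprime X _](subnK (ltnW q1)) addn1 coprimeSn.
  by apply/eqP; rewrite -(eqn_modDr 1) /count_in; apply/eqP; rewrite c1 c0.
- apply: arith => //; rewrite -ddr; exact: size_eq sg_inj.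
Qed.
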